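(* There exists a closed bounded free spectrahedrop that is closed under entrywise complex conjugation and has no free extreme points.
   Context: For a self-adjoint complex matrix tuple $A$, $\mathcal D_A=\bigcup_n\{X\in SM_n(\mathbb C)^h: I-\sum_iA_i\otimes X_i\succeq0\}$. A free spectrahedrop is a coordinate projection $\mathcal P_g\mathcal D_A$ of a free spectrahedron, i.e. the set of $X$ such that $(X,Y)\in\mathcal D_A$ for some $Y$ of the same size. A set $K$ is closed under complex conjugation if $\overline X\in K$ whenever $X\in K$ (entrywise conjugation). A point $X\in K(n)$ is a free extreme point of a matrix convex set $K$ if whenever $X=\sum_iV_i^*X^{(i)}V_i$ with $X^{(i)}\in K$, $V_i\ne0$, $\sum_iV_i^*V_i=I$, each $X^{(i)}$ is unitarily equivalent to $X$ or to $X\oplus Z$ for some $Z\in K$. *)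

(* Defs.v *)
From HB Require Import structures.
From mathcomp Require Import all_boot all_order all_algebra.
From mathcomp Require Import reals.
From mathcomp Require Import complex mxtens.

Set Implicit Arguments.
Unset Strict Implicit.
Unset Printing Implicit Defensive.

Import Order.TTheory GRing.Theory Num.Theory.
Local Open Scope ring_scope.

Section FreeConvexity.
Variable C : numClosedFieldType.

Definition adjmx {m n : nat} (M : 'M[C]_(m, n)) : 'M[C]_(n, m) :=
  (map_mx Num.conj M)^T.

Definition conjmx_entry {m n : nat} (M : 'M[C]_(m, n)) : 'M[C]_(m, n) :=
  map_mx Num.conj M.

Definition hermitian {n : nat} (M : 'M[C]_n) : Prop := adjmx M = M.

Definition psd {n : nat} (M : 'M[C]_n) : Prop :=
  hermitian M /\ forall v : 'cV[C]_n, 0 <= (adjmx v *m M *m v) 0 0.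

Definition herm_tuple {g n : nat} (X : 'I_g -> 'M[C]_n) : Prop :=
  forall i, hermitian (X i).

Definition LMI {d g n : nat} (A : 'I_g -> 'M[C]_d) (X : 'I_g -> 'M[C]_n)
  : 'M[C]_(d * n) :=
  1%:M - \sum_(i < g) (A i *t X i).

Definition freeset (g : nat) := forall n : nat, ('I_g -> 'M[C]_n) -> Prop.

Definition free_spectrahedron {d g : nat} (A : 'I_g -> 'M[C]_d) : freeset g :=
  fun n X => herm_tuple X /\ psd (LMI A X).

Definition pair_tuple {g h n : nat} (X : 'I_g -> 'M[C]_n) (Y : 'I_h -> 'M[C]_n)
  : 'I_(g + h) -> 'M[C]_n :=
  fun i => match split i with inl j => X j | inr j => Y j end.

Definition spectrahedrop {d g h : nat} (A : 'I_(g + h) -> 'M[C]_d) : freeset g :=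
  fun n X => exists Y : 'I_h -> 'M[C]_n, free_spectrahedron A (pair_tuple X Y).

Definition fs_closed {g : nat} (K : freeset g) : Prop :=
  forall n (X : 'I_g -> 'M[C]_n),
    (forall eps : C, 0 < eps ->
       exists Y, K n Y /\ forall i a b, `|Y i a b - X i a b| < eps) ->
    K n X.

Definition fs_bounded {g : nat} (K : freeset g) : Prop :=
  exists r : C, forall n (X : 'I_g -> 'M[C]_n),
    K n X -> psd (r%:M - \sum_(i < g) (X i *m X i)).

Definition fs_conj_closed {g : nat} (K : freeset g) : Prop :=
  forall n (X : 'I_g -> 'M[C]_n), K n X -> K n (fun i => conjmx_entry (X i)).

Definition unit_equiv {g p q : nat} (X : 'I_g -> 'M[C]_p) (Y : 'I_g -> 'M[C]_q)
  : Prop :=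
  exists U : 'M[C]_(p, q),
    adjmx U *m U = 1%:M /\ U *m adjmx U = 1%:M /\
    forall i, adjmx U *m X i *m U = Y i.

Definition free_extreme {g : nat} (K : freeset g) (n : nat)
  (X : 'I_g -> 'M[C]_n) : Prop :=
  K n X /\
  forall (k : nat) (ns : 'I_k -> nat)
         (Xs : forall j : 'I_k, 'I_g -> 'M[C]_(ns j))
         (V : forall j : 'I_k, 'M[C]_(ns j, n)),
    (forall j, K (ns j) (Xs j)) ->
    (forall j, V j != 0) ->
    \sum_(j < k) (adjmx (V j) *m V j) = 1%:M ->
    (forall i, X i = \sum_(j < k) (adjmx (V j) *m Xs j i *m V j)) ->
    forall j, unit_equiv (Xs j) X \/
      exists (m : nat) (Z : 'I_g -> 'M[C]_m),
        K m Z /\ unit_equiv (Xs j) (fun i => block_mx (X i) 0 0 (Z i)).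

End FreeConvexity.

(* Main.v *)
Require Import Defs.
From HB Require Import structures.
From mathcomp Require Import all_boot all_order all_algebra.
From mathcomp Require Import reals.
From mathcomp Require Import complex mxtens.
From mathcomp Require Import ring lra zify.
From mathcomp Require Import boolp classical_sets topology normedtype.
Require Import Defs.

Set Implicit Arguments.
Unset Strict Implicit.
Unset Printing Implicit Defensive.

Import Order.TTheory GRing.Theory Num.Theory.
Import numFieldNormedType.Exports.
Local Open Scope ring_scope.

(* Example: the real-part projection of the (complex) row ball
     { (T1, T2) : T1 T1^* + T2 T2^* <= I },   T_j = X_j + i Y_j,
   realised as the free spectrahedrop with the 3x3 pencil Aop below.
   It is closed (compactness of the witness set), bounded, closed under
   entrywise conjugation (Y -> - conj Y), and has no free extreme points:
   every point admits a one-step dilation built from a kernel vector of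
   [T1 T2], which cannot be unitarily equivalent to X or X (+) Z by a
   trace argument. *)

Section Alg.
Variable C : numClosedFieldType.

Lemma adjmxE m n (M : 'M[C]_(m,n)) i j : adjmx M i j = (M j i)^*.
Proof. by rewrite /adjmx !mxE. Qed.

Lemma adjmxK m n (M : 'M[C]_(m,n)) : adjmx (adjmx M) = M.
Proof. by apply/matrixP=> i j; rewrite !adjmxE conjCK. Qed.

Lemma adjmxD m n (M N : 'M[C]_(m,n)) : adjmx (M + N) = adjmx M + adjmx N.
Proof. by apply/matrixP=> i j; rewrite !mxE rmorphD. Qed.

Lemma adjmxN m n (M : 'M[C]_(m,n)) : adjmx (- M) = - adjmx M.
Proof. by apply/matrixP=> i j; rewrite !mxE rmorphN. Qed.

Lemma adjmxB m n (M N : 'M[C]_(m,n)) : adjmx (M - N) = adjmx M - adjmx N.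
Proof. by rewrite adjmxD adjmxN. Qed.

Lemma adjmxZ m n c (M : 'M[C]_(m,n)) : adjmx (c *: M) = c^* *: adjmx M.
Proof. by apply/matrixP=> i j; rewrite !mxE rmorphM. Qed.

Lemma adjmx0 m n : adjmx (0 : 'M[C]_(m,n)) = 0.
Proof. by apply/matrixP=> i j; rewrite !mxE rmorph0. Qed.

Lemma adjmx1 n : adjmx (1%:M : 'M[C]_n) = 1%:M.
Proof. by apply/matrixP=> i j; rewrite !mxE eq_sym; case: eqP; rewrite ?conjC1 ?conjC0. Qed.

Lemma adjmx_mul m n p (M : 'M[C]_(m,n)) (N : 'M[C]_(n,p)) :
  adjmx (M *m N) = adjmx N *m adjmx M.
Proof.
apply/matrixP=> i j; rewrite !mxE rmorph_sum; apply: eq_bigr=> k _.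
by rewrite !mxE rmorphM mulrC.
Qed.

Lemma adjmx_sum m n I (r : seq I) (P : pred I) (F : I -> 'M[C]_(m,n)) :
  adjmx (\sum_(i <- r | P i) F i) = \sum_(i <- r | P i) adjmx (F i).
Proof.
apply/matrixP=> a b; rewrite !mxE summxE rmorph_sum summxE.
by apply: eq_bigr=> i _; rewrite !mxE.
Qed.

Lemma adjmx_tens m n p q (M : 'M[C]_(m,n)) (N : 'M[C]_(p,q)) :
  adjmx (M *t N) = adjmx M *t adjmx N.
Proof. by apply/matrixP=> i j; rewrite !mxE rmorphM. Qed.

Lemma adjmx_block m1 m2 n1 n2 (A : 'M[C]_(m1,n1)) (B : 'M[C]_(m1,n2))
  (D : 'M[C]_(m2,n1)) (E : 'M[C]_(m2,n2)) :
  adjmx (block_mx A B D E) = block_mx (adjmx A) (adjmx D) (adjmx B) (adjmx E).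
Proof. by rewrite /adjmx map_block_mx tr_block_mx. Qed.

Lemma adjmx_col m1 m2 n (A : 'M[C]_(m1,n)) (B : 'M[C]_(m2,n)) :
  adjmx (col_mx A B) = row_mx (adjmx A) (adjmx B).
Proof. by rewrite /adjmx map_col_mx tr_col_mx. Qed.

Definition form m p (u : 'cV[C]_m) (M : 'M[C]_(m,p)) (w : 'cV[C]_p) : C :=
  (adjmx u *m M *m w) 0 0.

Lemma formE m p (u : 'cV[C]_m) (M : 'M[C]_(m,p)) w :
  form u M w = \sum_i \sum_j (u i 0)^* * M i j * w j 0.
Proof.
rewrite /form mxE (eq_bigr (fun j => \sum_i (u i 0)^* * M i j * w j 0)).
  by rewrite exchange_big.
move=> j _; rewrite mxE big_distrl; apply: eq_bigr => i _; by rewrite !mxE.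
Qed.

Lemma formDl m p (u1 u2 : 'cV[C]_m) (M : 'M[C]_(m,p)) w :
  form (u1 + u2) M w = form u1 M w + form u2 M w.
Proof. by rewrite /form adjmxD !mulmxDl mxE. Qed.

Lemma formDm m p (u : 'cV[C]_m) (M N : 'M[C]_(m,p)) w :
  form u (M + N) w = form u M w + form u N w.
Proof. by rewrite /form mulmxDr mulmxDl mxE. Qed.

Lemma formDr m p (u : 'cV[C]_m) (M : 'M[C]_(m,p)) w1 w2 :
  form u M (w1 + w2) = form u M w1 + form u M w2.
Proof. by rewrite /form mulmxDr mxE. Qed.

Lemma formNl m p (u : 'cV[C]_m) (M : 'M[C]_(m,p)) w :
  form (- u) M w = - form u M w.
Proof. by rewrite /form adjmxN !mulNmx mxE. Qed.
Lemma formNm m p (u : 'cV[C]_m) (M : 'M[C]_(m,p)) w :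
  form u (- M) w = - form u M w.
Proof. by rewrite /form mulmxN mulNmx mxE. Qed.
Lemma formNr m p (u : 'cV[C]_m) (M : 'M[C]_(m,p)) w :
  form u M (- w) = - form u M w.
Proof. by rewrite /form mulmxN mxE. Qed.
Lemma formZl m p c (u : 'cV[C]_m) (M : 'M[C]_(m,p)) w :
  form (c *: u) M w = c^* * form u M w.
Proof. by rewrite /form adjmxZ -!scalemxAl mxE. Qed.
Lemma formZm m p c (u : 'cV[C]_m) (M : 'M[C]_(m,p)) w :
  form u (c *: M) w = c * form u M w.
Proof. by rewrite /form -scalemxAr -scalemxAl mxE. Qed.
Lemma formZr m p c (u : 'cV[C]_m) (M : 'M[C]_(m,p)) w :
  form u M (c *: w) = c * form u M w.
Proof. by rewrite /form -scalemxAr mxE. Qed.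
Lemma form0m m p (u : 'cV[C]_m) (w : 'cV[C]_p) : form u 0 w = 0.
Proof. by rewrite /form mulmx0 mul0mx mxE. Qed.
Lemma formMr m p q (u : 'cV[C]_m) (M : 'M[C]_(m,p)) (N : 'M[C]_(p,q)) w :
  form u (M *m N) w = form u M (N *m w).
Proof. by rewrite /form !mulmxA. Qed.
Lemma formMl m p q (u : 'cV[C]_m) (M : 'M[C]_(m,p)) (N : 'M[C]_(p,q)) w :
  form u (M *m N) w = form (adjmx M *m u) N w.
Proof. by rewrite /form adjmx_mul adjmxK !mulmxA. Qed.
Lemma form_conj m p (u : 'cV[C]_m) (M : 'M[C]_(m,p)) w :
  (form u M w)^* = form w (adjmx M) u.
Proof.
rewrite /form -adjmxE !adjmx_mul adjmxK.
by rewrite mulmxA.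
Qed.

Definition nrm m (u : 'cV[C]_m) := form u 1%:M u.

Lemma nrmE m (u : 'cV[C]_m) : nrm u = \sum_i `|u i 0| ^+ 2.
Proof.
rewrite /nrm /form mul_mx_scalar scale1r mxE; apply: eq_bigr => i _.
by rewrite !mxE normCK mulrC.
Qed.

Lemma nrm_ge0 m (u : 'cV[C]_m) : 0 <= nrm u.
Proof. by rewrite nrmE sumr_ge0 // => i _; rewrite exprn_ge0. Qed.

Lemma nrm_eq0 m (u : 'cV[C]_m) : nrm u = 0 -> u = 0.
Proof.
rewrite nrmE => /eqP; rewrite psumr_eq0 => [/allP H|i _]; last exact: exprn_ge0.
apply/matrixP=> i j; rewrite [j]ord1 mxE.
have /H : i \in index_enum 'I_m by rewrite mem_index_enum.
by rewrite /= sqrf_eq0 normr_eq0 => /eqP.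
Qed.


Lemma pairL g h n (X : 'I_g -> 'M[C]_n) (Y : 'I_h -> 'M[C]_n) j :
  pair_tuple X Y (lshift h j) = X j.
Proof. by rewrite /pair_tuple (unsplitK (inl j)). Qed.
Lemma pairR g h n (X : 'I_g -> 'M[C]_n) (Y : 'I_h -> 'M[C]_n) j :
  pair_tuple X Y (rshift g j) = Y j.
Proof. by rewrite /pair_tuple (unsplitK (inr j)). Qed.

Lemma sum_tens d n (F : 'I_(d * n) -> C) :
  \sum_k F k = \sum_a \sum_p F (mxtens_index (a, p)).
Proof.
rewrite pair_big /= (reindex (@mxtens_index d n)) /=.
  by apply: eq_bigr => -[a p].
by exists (@mxtens_unindex d n) => x _; [exact: mxtens_indexK | exact: mxtens_unindexK].
Qed.

Definition sl d n (v : 'cV[C]_(d * n)) (a : 'I_d) : 'cV[C]_n :=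
  \col_p v (mxtens_index (a, p)) 0.
Definition mk d n (u : 'I_d -> 'cV[C]_n) : 'cV[C]_(d * n) :=
  \col_k u (@mxtens_unindex d n k).1 (@mxtens_unindex d n k).2 0.

Lemma sl_mk d n (u : 'I_d -> 'cV[C]_n) a : sl (mk u) a = u a.
Proof. by apply/matrixP=> p j; rewrite [j]ord1 !mxE mxtens_indexK. Qed.
Lemma mk_sl d n (v : 'cV[C]_(d * n)) : mk (sl v) = v.
Proof.
apply/matrixP=> k j; rewrite [j]ord1 !mxE.
by rewrite -surjective_pairing mxtens_unindexK.
Qed.

Lemma form_tens d n (B : 'M[C]_d) (X : 'M[C]_n) (v w : 'cV[C]_(d * n)) :
  form v (B *t X) w = \sum_a \sum_b B a b * form (sl v a) X (sl w b).
Proof.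
rewrite formE sum_tens; apply: eq_bigr => a _.
under eq_bigr => p _ do rewrite sum_tens.
rewrite exchange_big /=; apply: eq_bigr => b _.
rewrite formE big_distrr /=; apply: eq_bigr => p _.
rewrite big_distrr /=; apply: eq_bigr => q _.
by rewrite tensmxE !mxE; ring.
Qed.

Lemma one_tens d n : (1%:M : 'M[C]_(d * n)) = (1%:M : 'M[C]_d) *t (1%:M : 'M[C]_n).
Proof.
apply/matrixP => k l.
case: (mxtens_indexP k) => a p; case: (mxtens_indexP l) => b q.
rewrite tensmxE !mxE; case: (a =P b) => [->|ab] /=; case: (p =P q) => [->|pq] /=;
  rewrite ?eqxx ?mulr1 ?mul0r ?mulr0 //.
- by case: eqP => // /(can_inj (@mxtens_indexK _ _)) [].
- by case: eqP => // /(can_inj (@mxtens_indexK _ _)) [].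
- by case: eqP => // /(can_inj (@mxtens_indexK _ _)) [].
Qed.

Lemma form_sum m p I (r : seq I) (P : pred I) (u : 'cV[C]_m) (F : I -> 'M[C]_(m,p)) w :
  form u (\sum_(i <- r | P i) F i) w = \sum_(i <- r | P i) form u (F i) w.
Proof.
rewrite /form mulmx_sumr mulmx_suml summxE; apply: eq_bigr => i _ //.
Qed.

Lemma form_LMI d g n (A : 'I_g -> 'M[C]_d) (Z : 'I_g -> 'M[C]_n) v :
  form v (LMI A Z) v = \sum_a nrm (sl v a)
    - \sum_k \sum_a \sum_b A k a b * form (sl v a) (Z k) (sl v b).
Proof.
rewrite /LMI -[X in X - _]addr0 -[in LHS]addrA formDm.
congr (_ + _).
  rewrite one_tens form_tens; apply: eq_bigr => a _.
  rewrite (bigD1 a) //= big1 ?addr0; first by rewrite mxE eqxx mul1r.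
  by move=> b /negPf ab; rewrite mxE eq_sym ab mul0r.
by rewrite add0r formNm form_sum; congr (- _); apply: eq_bigr => k _; rewrite form_tens.
Qed.


Lemma sum_delta d (i j : 'I_d) (F : 'I_d -> 'I_d -> C) :
  \sum_a \sum_b delta_mx i j a b * F a b = F i j.
Proof.
rewrite (bigD1 i) //=.
have -> : \sum_(a < d | a != i) \sum_b delta_mx i j a b * F a b = 0.
  by apply: big1 => a /negPf ai; apply: big1 => b _; rewrite mxE ai mul0r.
rewrite addr0 (bigD1 j) //=.
have -> : \sum_(b < d | b != j) delta_mx i j i b * F i b = 0.
  by apply: big1 => b /negPf bj; rewrite mxE bj andbF mul0r.
by rewrite mxE !eqxx mul1r addr0.
Qed.

Lemma sum_mxD d (M N : 'M[C]_d) (F : 'I_d -> 'I_d -> C) :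
  \sum_a \sum_b (M + N) a b * F a b =
  \sum_a \sum_b M a b * F a b + \sum_a \sum_b N a b * F a b.
Proof.
rewrite -big_split; apply: eq_bigr => a _; rewrite -big_split; apply: eq_bigr => b _.
by rewrite mxE mulrDl.
Qed.

Lemma sum_mxZ d c (M : 'M[C]_d) (F : 'I_d -> 'I_d -> C) :
  \sum_a \sum_b (c *: M) a b * F a b = c * \sum_a \sum_b M a b * F a b.
Proof.
rewrite big_distrr; apply: eq_bigr => a _; rewrite big_distrr; apply: eq_bigr => b _.
by rewrite mxE /= mulrA.
Qed.

Definition e3 (j : 'I_2) : 'I_3 := lift ord0 j.
Definition AX (j : 'I_2) : 'M[C]_3 := delta_mx ord0 (e3 j) + delta_mx (e3 j) ord0.
Definition AY (j : 'I_2) : 'M[C]_3 := 'i *: delta_mx ord0 (e3 j) - 'i *: delta_mx (e3 j) ord0.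
Definition Aop : 'I_(2 + 2) -> 'M[C]_3 := pair_tuple AX AY.

Definition Qf n (X Y : 'I_2 -> 'M[C]_n) (x : 'cV[C]_n) (y : 'I_2 -> 'cV[C]_n) :=
  nrm x + \sum_j nrm (y j)
  - \sum_j (form x (X j + 'i *: Y j) (y j) + form (y j) (X j - 'i *: Y j) x).

Lemma form_LMI_A n (X Y : 'I_2 -> 'M[C]_n) v :
  form v (LMI Aop (pair_tuple X Y)) v = Qf X Y (sl v ord0) (fun j => sl v (e3 j)).
Proof.
rewrite form_LMI /Qf big_ord_recl; congr (_ + _ - _).
rewrite big_split_ord /= -big_split /=; apply: eq_bigr => j _.
rewrite /Aop !pairL !pairR /AX /AY sum_mxD !sum_delta sum_mxD.
rewrite -scaleNr !sum_mxZ !sum_delta.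
rewrite !formDm formNm !formZm. ring.
Qed.


Lemma adjmx_delta d (i j : 'I_d) : adjmx (delta_mx i j : 'M[C]_d) = delta_mx j i.
Proof.
apply/matrixP=> a b; rewrite !mxE andbC.
by case: (_ && _); rewrite ?conjC1 ?conjC0.
Qed.

Lemma herm_Aop : herm_tuple Aop.
Proof.
move=> k; rewrite /hermitian /Aop; case: (split_ordP k) => j ->.
  by rewrite pairL /AX adjmxD !adjmx_delta addrC.
rewrite pairR /AY adjmxB !adjmxZ !adjmx_delta conjCi.
by rewrite !scaleNr opprK addrC.
Qed.

Lemma herm_pair g h n (X : 'I_g -> 'M[C]_n) (Y : 'I_h -> 'M[C]_n) :
  herm_tuple (pair_tuple X Y) <-> herm_tuple X /\ herm_tuple Y.
Proof.
split=> [H|[HX HY] k].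
  by split=> j; [move: (H (lshift h j)); rewrite pairL | move: (H (rshift g j)); rewrite pairR].
by case: (split_ordP k) => j ->; rewrite ?pairL ?pairR.
Qed.

Lemma herm_LMI d g n (A : 'I_g -> 'M[C]_d) (Z : 'I_g -> 'M[C]_n) :
  herm_tuple A -> herm_tuple Z -> hermitian (LMI A Z).
Proof.
move=> HA HZ; rewrite /hermitian /LMI adjmxB adjmx1 adjmx_sum; congr (_ - _).
by apply: eq_bigr => k _; rewrite adjmx_tens HA HZ.
Qed.

Lemma Qf_ext n (X Y : 'I_2 -> 'M[C]_n) x y y' :
  (forall j, y j = y' j) -> Qf X Y x y = Qf X Y x y'.
Proof.
move=> E; rewrite /Qf; congr (_ + _ - _); apply: eq_bigr => j _; by rewrite E.
Qed.

Lemma psd_LMI_A n (X Y : 'I_2 -> 'M[C]_n) :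
  herm_tuple X -> herm_tuple Y ->
  (psd (LMI Aop (pair_tuple X Y)) <-> forall x y, 0 <= Qf X Y x y).
Proof.
move=> HX HY; have HL : hermitian (LMI Aop (pair_tuple X Y)).
  by apply: herm_LMI; [exact: herm_Aop | apply/herm_pair].
split=> [[_ H] x y|H]; last first.
  by split=> // v; have := H (sl v ord0) (fun j => sl v (e3 j)); rewrite -form_LMI_A.
pose u : 'I_3 -> 'cV[C]_n := fun a => if unlift ord0 a is Some j then y j else x.
have := H (mk u); rewrite -/(form _ _ _) form_LMI_A !sl_mk /u /=.
rewrite unlift_none.
rewrite (@Qf_ext _ _ _ _ _ y) // => j; by rewrite sl_mk /e3 liftK.
Qed.


Lemma form0l m p (M : 'M[C]_(m,p)) w : form 0 M w = 0.
Proof. by rewrite /form adjmx0 !mul0mx mxE. Qed.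
Lemma form0r m p (u : 'cV[C]_m) (M : 'M[C]_(m,p)) : form u M 0 = 0.
Proof. by rewrite /form mulmx0 mxE. Qed.
Lemma nrm0 m : nrm (0 : 'cV[C]_m) = 0.
Proof. exact: form0l. Qed.

Definition dlt n (j : 'I_2) (w : 'cV[C]_n) : 'I_2 -> 'cV[C]_n :=
  fun j' => if j' == j then w else 0.

Lemma Qf_single n (X Y : 'I_2 -> 'M[C]_n) x j w :
  Qf X Y x (dlt j w) =
  nrm x + nrm w - (form x (X j + 'i *: Y j) w + form w (X j - 'i *: Y j) x).
Proof.
rewrite /Qf (bigD1 j) //= [X in _ + (_ + X) - _]big1 => [|k /negPf kj]; last first.
  by rewrite /dlt kj nrm0.
rewrite (bigD1 j) //= [X in _ - (_ + X)]big1 => [|k /negPf kj]; last first.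
  by rewrite /dlt kj form0l form0r addr0.
by rewrite /dlt eqxx !addr0.
Qed.

Lemma nrm_mul_herm n (X : 'M[C]_n) u : hermitian X ->
  nrm (X *m u) = form u (X *m X) u.
Proof. by move=> HX; rewrite /nrm /form adjmx_mul HX mulmx1 !mulmxA. Qed.

Lemma bound_step n (X Y : 'I_2 -> 'M[C]_n) j u :
  herm_tuple X -> (forall x y, 0 <= Qf X Y x y) ->
  form u (X j *m X j) u <= nrm u.
Proof.
move=> HX H.
have := addr_ge0 (H u (dlt j (X j *m u))) (H (X j *m u) (dlt j u)).
rewrite !Qf_single !formDm !formNm !formZm.
set F := form u (X j *m X j) u.
have E1 : form u (X j) (X j *m u) = F by rewrite /F formMr.
have E2 : form (X j *m u) (X j) u = F by rewrite /F /form adjmx_mul (HX j) !mulmxA.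
have E3 : nrm (X j *m u) = F by rewrite nrm_mul_herm.
rewrite E1 E2 E3 => H1.
rewrite -subr_ge0.
have E : 0 <= (nrm u - F) *+ 2.
  by move: H1; congr (0 <= _); rewrite -mulr_natl; ring.
by move: E; rewrite pmulrn_lge0.
Qed.


Lemma adjmx_scalar n a : adjmx (a%:M : 'M[C]_n) = (a^*)%:M.
Proof.
apply/matrixP=> i j; rewrite !mxE eq_sym.
by case: (i == j); rewrite ?mulr1n ?mulr0n ?conjC0.
Qed.

Lemma form_scalar n a (u : 'cV[C]_n) : form u a%:M u = a * nrm u.
Proof. by rewrite -scalemx1 formZm. Qed.

Lemma spec_A n (X : 'I_2 -> 'M[C]_n) :
  @spectrahedrop C 3 2 2 Aop n X <->
  exists Y, [/\ herm_tuple X, herm_tuple Y & forall x y, 0 <= Qf X Y x y].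
Proof.
split=> [[Y [/herm_pair [HX HY] P]]|[Y [HX HY P]]].
  by exists Y; split=> //; apply/psd_LMI_A.
exists Y; split; first exact/herm_pair.
exact/psd_LMI_A.
Qed.

Lemma bounded_A : fs_bounded (@spectrahedrop C 3 2 2 Aop).
Proof.
exists 2%:R => n X /spec_A [Y [HX HY P]]; split.
  rewrite /hermitian adjmxB adjmx_scalar conjC_nat adjmx_sum; congr (_ - _).
  by apply: eq_bigr => i _; rewrite adjmx_mul HX.
move=> v; rewrite -/(form v _ v) formDm formNm form_sum form_scalar subr_ge0.
apply: le_trans (ler_sum (index_enum 'I_2) (fun i _ => bound_step i v HX P)) _.
by rewrite sumr_const card_ord mulr_natl.
Qed.


Lemma cmM m n p (A : 'M[C]_(m,n)) (B : 'M[C]_(n,p)) :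
  conjmx_entry (A *m B) = conjmx_entry A *m conjmx_entry B.
Proof. by rewrite /conjmx_entry map_mxM. Qed.

Lemma adj_cm m n (A : 'M[C]_(m,n)) : adjmx (conjmx_entry A) = conjmx_entry (adjmx A).
Proof. by apply/matrixP=> i j; rewrite !mxE. Qed.

Lemma form_cm m p (u : 'cV[C]_m) (M : 'M[C]_(m,p)) w :
  form (conjmx_entry u) (conjmx_entry M) (conjmx_entry w) = (form u M w)^*.
Proof. by rewrite /form adj_cm -!cmM /conjmx_entry mxE. Qed.

Lemma cmK m n (A : 'M[C]_(m,n)) : conjmx_entry (conjmx_entry A) = A.
Proof. by apply/matrixP=> i j; rewrite !mxE conjCK. Qed.

Lemma cmD m n (A B : 'M[C]_(m,n)) : conjmx_entry (A + B) = conjmx_entry A + conjmx_entry B.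
Proof. by apply/matrixP=> i j; rewrite !mxE rmorphD. Qed.
Lemma cmB m n (A B : 'M[C]_(m,n)) : conjmx_entry (A - B) = conjmx_entry A - conjmx_entry B.
Proof. by apply/matrixP=> i j; rewrite !mxE rmorphB. Qed.
Lemma cmZ m n c (A : 'M[C]_(m,n)) : conjmx_entry (c *: A) = c^* *: conjmx_entry A.
Proof. by apply/matrixP=> i j; rewrite !mxE rmorphM. Qed.
Lemma cm1 n : conjmx_entry (1%:M : 'M[C]_n) = 1%:M.
Proof. by apply/matrixP=> i j; rewrite !mxE rmorph_nat. Qed.

Lemma conj_closed_A : fs_conj_closed (@spectrahedrop C 3 2 2 Aop).
Proof.
move=> n X /spec_A [Y [HX HY P]]; apply/spec_A.
exists (fun j => - conjmx_entry (Y j)); split.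
- by move=> j; rewrite /hermitian adj_cm HX.
- by move=> j; rewrite /hermitian adjmxN adj_cm HY.
move=> x y.
suff -> : Qf (fun j => conjmx_entry (X j)) (fun j => - conjmx_entry (Y j)) x y =
   (Qf X Y (conjmx_entry x) (fun j => conjmx_entry (y j)))^* by rewrite conjC_ge0.
rewrite /Qf !rmorphB !rmorphD !rmorph_sum /=; congr (_ + _ - _).
- by rewrite /nrm -form_cm !cmK cm1.
- by apply: eq_bigr => j _; rewrite /= /nrm -form_cm !cmK cm1.
apply: eq_bigr => j _; rewrite /= rmorphD /= -!form_cm !cmK.
by rewrite cmD cmB !cmZ conjCi !scalerN scaleNr.
Qed.


Definition i1 : 'I_2 := lift ord0 ord0.

Lemma Qf2 n (X Y : 'I_2 -> 'M[C]_n) x y :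
  Qf X Y x y = nrm x + nrm (y ord0) + nrm (y i1)
   - (form x (X ord0 + 'i *: Y ord0) (y ord0) + form (y ord0) (X ord0 - 'i *: Y ord0) x
     + (form x (X i1 + 'i *: Y i1) (y i1) + form (y i1) (X i1 - 'i *: Y i1) x)).
Proof. by rewrite /Qf !big_ord_recl !big_ord0 !addr0 addrA. Qed.

Lemma form_block m1 m2 p1 p2 (x : 'cV[C]_m1) (nu : 'cV[C]_m2) (y : 'cV[C]_p1) (mu : 'cV[C]_p2)
  P B D E :
  form (col_mx x nu) (block_mx P B D E) (col_mx y mu) =
  form x P y + form x B mu + form nu D y + form nu E mu.
Proof.
rewrite /form adjmx_col mul_row_block mul_row_col !mulmxDl !mxE; ring.
Qed.


Lemma nrm_col m1 m2 (x : 'cV[C]_m1) (nu : 'cV[C]_m2) :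
  nrm (col_mx x nu) = nrm x + nrm nu.
Proof. by rewrite /nrm scalar_mx_block form_block !form0m !addr0. Qed.

Lemma conj_half : (2^-1 : C)^* = 2^-1.
Proof. by rewrite fmorphV rmorph_nat. Qed.

Definition zv n (z0 z1 : 'cV[C]_n) (j : 'I_2) := if val j == 0%N then z0 else z1.
Definition Xd n (X : 'I_2 -> 'M[C]_n) z0 z1 : 'I_2 -> 'M[C]_(n + 1) :=
  fun j => block_mx (X j) (2^-1 *: zv z0 z1 j) (2^-1 *: adjmx (zv z0 z1 j)) 0.
Definition Yd n (Y : 'I_2 -> 'M[C]_n) z0 z1 : 'I_2 -> 'M[C]_(n + 1) :=
  fun j => block_mx (Y j) (('i / 2) *: zv z0 z1 j) (- ('i / 2) *: adjmx (zv z0 z1 j)) 0.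

Lemma half_i : 2^-1 + 'i * ('i / 2) = 0 :> C.
Proof. by rewrite mulrA -expr2 sqrCi mulN1r subrr. Qed.
Lemma half_i' : 2^-1 + 'i * - ('i / 2) = 1 :> C.
Proof.
rewrite mulrN mulrA -expr2 sqrCi; field=> //.
Qed.
Lemma half_i'' : 2^-1 - 'i * ('i / 2) = 1 :> C.
Proof. by rewrite mulrA -expr2 sqrCi; field. Qed.
Lemma half_i''' : 2^-1 - 'i * - ('i / 2) = 0 :> C.
Proof. by rewrite mulrN opprK half_i. Qed.

Lemma Xd_plus n (X Y : 'I_2 -> 'M[C]_n) z0 z1 j :
  Xd X z0 z1 j + 'i *: Yd Y z0 z1 j =
  block_mx (X j + 'i *: Y j) 0 (adjmx (zv z0 z1 j)) 0.
Proof.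
rewrite /Xd /Yd scale_block_mx add_block_mx !scalerA -!scalerDl half_i half_i'.
by rewrite scale0r scale1r scaler0 addr0.
Qed.

Lemma Xd_minus n (X Y : 'I_2 -> 'M[C]_n) z0 z1 j :
  Xd X z0 z1 j - 'i *: Yd Y z0 z1 j =
  block_mx (X j - 'i *: Y j) (zv z0 z1 j) 0 0.
Proof.
rewrite /Xd /Yd scale_block_mx opp_block_mx add_block_mx !scalerA -!scalerBl.
by rewrite half_i'' half_i''' scale0r scale1r scaler0 subr0.
Qed.


Lemma fm1 m (y z : 'cV[C]_m) (nu : 'cV[C]_1) : form y 1%:M (z *m nu) = form y z nu.
Proof. by rewrite -formMr mul1mx. Qed.
Lemma fm3 m p (x : 'cV[C]_m) (T : 'M[C]_(m,p)) z (nu : 'cV[C]_1) :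
  form x T (z *m nu) = form x (T *m z) nu.
Proof. by rewrite -formMr. Qed.
Lemma fm4 m p (x : 'cV[C]_p) (M : 'M[C]_(m,p)) (z : 'cV[C]_m) (nu : 'cV[C]_1) :
  form (z *m nu) M x = form nu (adjmx z *m M) x.
Proof. by rewrite formMl adjmxK. Qed.
Lemma fm5 m (z : 'cV[C]_m) (nu : 'cV[C]_1) :
  form (z *m nu) 1%:M (z *m nu) = nrm z * nrm nu.
Proof.
rewrite fm4 mulmx1 fm3 -form_scalar; congr form.
by rewrite [LHS]mx11_scalar /nrm /form mulmx1 !mxE.
Qed.

Lemma dil_psd n (X Y : 'I_2 -> 'M[C]_n) z0 z1 :
  herm_tuple X -> herm_tuple Y -> (forall x y, 0 <= Qf X Y x y) ->
  (X ord0 + 'i *: Y ord0) *m z0 + (X i1 + 'i *: Y i1) *m z1 = 0 ->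
  nrm z0 + nrm z1 <= 1 ->
  forall x y, 0 <= Qf (Xd X z0 z1) (Yd Y z0 z1) x y.
Proof.
move=> HX HY P Hz Hn x y.
rewrite Qf2 !Xd_plus !Xd_minus.
rewrite -[x]vsubmxK -[y ord0]vsubmxK -[y i1]vsubmxK.
set x0 := usubmx x; set nu := dsubmx x.
set y0 := usubmx (y ord0); set mu0 := dsubmx (y ord0).
set y1 := usubmx (y i1); set mu1 := dsubmx (y i1).
rewrite !form_block !nrm_col !form0m /zv /=.
have H := P x0 (fun j => (if j == ord0 then y0 else y1) - zv z0 z1 j *m nu).
rewrite Qf2 /zv /= in H.
rewrite /nrm !formDr !formNr !formDl !formNl in H.
rewrite !fm5 !fm1 !fm3 !fm4 in H.
set T0 := X ord0 + 'i *: Y ord0 in Hz H *.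
set T1 := X i1 + 'i *: Y i1 in Hz H *.
have a : form x0 (T0 *m z0) nu = - form x0 (T1 *m z1) nu.
  by apply/eqP; rewrite -addr_eq0 -formDm Hz form0m.
have adjT j : adjmx (X j + 'i *: Y j) = X j - 'i *: Y j.
  by rewrite adjmxD adjmxZ HX HY conjCi scaleNr.
have b : form nu (adjmx z0 *m (X ord0 - 'i *: Y ord0)) x0 =
         - form nu (adjmx z1 *m (X i1 - 'i *: Y i1)) x0.
  apply/eqP; rewrite -addr_eq0 -formDm -!adjT -!adjmx_mul -adjmxD -/T0 -/T1 Hz.
  by rewrite adjmx0 form0m.
rewrite a b in H.
have R : 0 <= nrm nu * (1 - (nrm z0 + nrm z1)) + nrm mu0 + nrm mu1.
  by rewrite !addr_ge0 ?nrm_ge0 // mulr_ge0 ?nrm_ge0 // subr_ge0.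
apply: le_trans (addr_ge0 H R) _.
rewrite le_eqVlt; apply/orP; left; apply/eqP.
rewrite /nrm !mulmx1; ring.
Qed.


Lemma herm_Xd n (X : 'I_2 -> 'M[C]_n) z0 z1 : herm_tuple X -> herm_tuple (Xd X z0 z1).
Proof.
move=> HX j; rewrite /hermitian /Xd adjmx_block !adjmxZ conj_half adjmxK adjmx0 HX //.
Qed.

Lemma herm_Yd n (Y : 'I_2 -> 'M[C]_n) z0 z1 : herm_tuple Y -> herm_tuple (Yd Y z0 z1).
Proof.
move=> HY j; rewrite /hermitian /Yd adjmx_block !adjmxZ adjmxK adjmx0 HY.
by rewrite rmorphN !rmorphM /= conjCi conj_half mulNr opprK.
Qed.

Lemma ker_exists n (T0 T1 : 'M[C]_n.+1) : exists z0 z1,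
  [/\ z0 != 0 \/ z1 != 0, T0 *m z0 + T1 *m z1 = 0 & nrm z0 + nrm z1 <= 1].
Proof.
pose Rm := row_mx T0 T1.
pose K := kermx Rm^T.
have KN0 : K != 0.
  rewrite -mxrank_eq0 mxrank_ker.
  have := rank_leq_col Rm^T; rewrite subn_eq0 => H; lia.
have [i Hi] : exists i, row i K != 0.
  case: (pickP (fun i => row i K != 0)) => [i Hi|H0]; first by exists i.
  by move: KN0; rewrite (_ : K = 0) ?eqxx //; apply/row_matrixP => i; rewrite row0; apply/eqP; move/negbFE: (H0 i).
pose w := (row i K)^T.
have Hw : Rm *m w = 0.
  by rewrite /w -[Rm]trmxK -trmx_mul -row_mul mulmx_ker row0 trmx0.
have wN0 : w != 0 by rewrite /w trmx_eq0.
pose s := nrm w.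
have s0 : 0 <= s := nrm_ge0 w.
have s1 : 0 < 1 + s by apply: lt_le_trans ltr01 _; rewrite lerDl.
pose c := (1 + s)^-1.
have c0 : 0 <= c by rewrite invr_ge0 ltW.
pose z := c *: w.
have zN0 : z != 0 by rewrite scaler_eq0 negb_or invr_eq0 wN0 andbT; rewrite gt_eqF.
have Hnz : nrm z <= 1.
  rewrite /nrm formZl formZr -/(nrm w) -/s geC0_conj // mulrA.
  have E : c * (1 + s) = 1 by rewrite mulVf // gt_eqF.
  have : c * c * s <= c * c * ((1 + s) * (1 + s)).
    apply: ler_wpM2l; first exact: mulr_ge0.
    rewrite mulrDl !mulrDr !mul1r mulr1 -subr_ge0.
    have -> : 1 + s + (s + s * s) - s = 1 + s + s * s by ring.
    by rewrite !addr_ge0 // mulr_ge0.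
  move=> H; apply: le_trans H _.
  have -> : c * c * ((1 + s) * (1 + s)) = (c * (1 + s)) * (c * (1 + s)) by ring.
  by rewrite E mulr1.
exists (usubmx z), (dsubmx z); split.
- apply/orP; rewrite -negb_and; apply: contra zN0 => /andP [/eqP u /eqP d].
  by rewrite -[z]vsubmxK u d col_mx0.
- by rewrite -mul_row_col vsubmxK /z -scalemxAr Hw scaler0.
- by rewrite -nrm_col vsubmxK.
Qed.


Lemma tr_adj_conj p q (U : 'M[C]_(p,q)) (M : 'M[C]_p) :
  U *m adjmx U = 1%:M -> \tr (adjmx U *m M *m U) = \tr M.
Proof. by move=> H; rewrite mxtrace_mulC !mulmxA H mul1mx. Qed.

Lemma sq_adj_conj p q (U : 'M[C]_(p,q)) (M : 'M[C]_p) :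
  U *m adjmx U = 1%:M ->
  adjmx U *m (M *m M) *m U = (adjmx U *m M *m U) *m (adjmx U *m M *m U).
Proof.
move=> H; rewrite !mulmxA; congr (_ *m _).
by rewrite -[adjmx U *m M *m U *m adjmx U]mulmxA H mulmx1.
Qed.

Lemma tr_sq_small m (Z : 'M[C]_m) : (m <= 1)%N -> \tr (Z *m Z) = (\tr Z) ^+ 2.
Proof.
case: m Z => [|[|m]] Z // _.
  by rewrite /mxtrace !big_ord0 expr2 mulr0.
by rewrite /mxtrace !big_ord1 mxE big_ord1 expr2.
Qed.

Lemma tr11 (M : 'M[C]_1) : \tr M = M 0 0.
Proof. by rewrite /mxtrace big_ord1. Qed.

Definition kq : C := 2^-1 * 2^-1 + 2^-1 * 2^-1.
Lemma kq_neq0 : kq != 0.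
Proof.
have h : 0 < (2^-1 : C) by rewrite invr_gt0 ltr0n.
by rewrite gt_eqF // addr_gt0 // mulr_gt0.
Qed.

Lemma tr_Xd n (X : 'I_2 -> 'M[C]_n) z0 z1 j : \tr (Xd X z0 z1 j) = \tr (X j).
Proof. by rewrite /Xd mxtrace_block mxtrace0 addr0. Qed.

Lemma tr_Xd2 n (X : 'I_2 -> 'M[C]_n) z0 z1 j :
  \tr (Xd X z0 z1 j *m Xd X z0 z1 j) = \tr (X j *m X j) + kq * nrm (zv z0 z1 j).
Proof.
rewrite /Xd mulmx_block mxtrace_block mxtraceD mulmx0 addr0 mxtrace_mulC.
rewrite -!scalemxAl -!scalemxAr !scalerA !mxtraceZ /kq /nrm /form mulmx1 -tr11.
by rewrite (mxtrace_mulC (zv z0 z1 j)); ring.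
Qed.

Lemma no_free_ext n (X : 'I_2 -> 'M[C]_n.+1) :
  ~ free_extreme (@spectrahedrop C 3 2 2 Aop) X.
Proof.
move=> [/spec_A [Y [HX HY P]] H].
have [z0 [z1 [Hnz Hz Hn]]] := ker_exists (X ord0 + 'i *: Y ord0) (X i1 + 'i *: Y i1).
pose W := Xd X z0 z1.
have KW : @spectrahedrop C 3 2 2 Aop (n.+1 + 1) W.
  apply/spec_A; exists (Yd Y z0 z1); split; [exact: herm_Xd | exact: herm_Yd |].
  exact: dil_psd.
pose V : 'M[C]_(n.+1 + 1, n.+1) := col_mx 1%:M 0.
have VV : adjmx V *m V = 1%:M.
  by rewrite /V adjmx_col mul_row_col adjmx1 adjmx0 mulmx1 mul0mx addr0.
have HXi : forall i, X i = adjmx V *m W i *m V.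
  move=> i; rewrite /V adjmx_col adjmx1 adjmx0 /W /Xd mul_row_block mul_row_col.
  by rewrite !mul1mx !mul0mx !addr0 mulmx1 mulmx0 addr0.
have := H 1 (fun _ => (n.+1 + 1)%N) (fun _ => W) (fun _ => V) (fun _ => KW).
case/(_ _ _ _ ord0).
- move=> _; apply/eqP => /matrixP /(_ (lshift 1 0) 0).
  by rewrite /V col_mxEu !mxE eqxx => /eqP; rewrite oner_eq0.
- by rewrite big_ord1.
- by move=> i; rewrite big_ord1.
- case=> U [UU [UU' _]].
  have := mxrankM_maxl U (adjmx U); rewrite UU' mxrank1 => h.
  by have := rank_leq_col U; lia.
case=> m [Z [_ [U [UU [UU' HU]]]]].
have m1 : (m <= 1)%N.
  have := mxrankM_maxr (adjmx U) U; rewrite UU mxrank1 => h.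
  by have := rank_leq_row U; lia.
have Hj j : nrm (zv z0 z1 j) = 0.
  have t1 := tr_adj_conj (W j) UU'.
  have t2 := tr_adj_conj (W j *m W j) UU'.
  rewrite sq_adj_conj // HU in t2; rewrite HU in t1.
  rewrite mulmx_block mxtrace_block in t2.
  rewrite mxtrace_block in t1.
  rewrite tr_Xd in t1; rewrite tr_Xd2 in t2.
  rewrite !mulmx0 !addr0 add0r in t2.
  have tz : \tr (Z j) = 0 by apply: (addrI (\tr (X j))); rewrite addr0.
  have t3 : \tr (Z j *m Z j) = kq * nrm (zv z0 z1 j) by apply: (addrI (\tr (X j *m X j))).
  rewrite tr_sq_small // tz expr2 mulr0 in t3.
  by move/esym/eqP: t3; rewrite mulf_eq0 (negbTE kq_neq0) /= => /eqP.
case: Hnz => /negP; apply; apply/eqP; apply: nrm_eq0.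
  by have := Hj ord0.
by have := Hj i1.
Qed.


Lemma form_delta m p (a : 'I_m) (b : 'I_p) (M : 'M[C]_(m,p)) :
  form (delta_mx a 0) M (delta_mx b 0) = M a b.
Proof.
rewrite formE (bigD1 a) //=.
have -> : \sum_(i < m | i != a) \sum_j ((delta_mx a 0 : 'cV[C]_m) i 0)^* * M i j * (delta_mx b 0 : 'cV[C]_p) j 0 = 0.
  by apply: big1 => i /negPf ia; apply: big1 => j _; rewrite mxE ia /= conjC0 !mul0r.
rewrite addr0 (bigD1 b) //=.
have -> : \sum_(j < p | j != b) ((delta_mx a 0 : 'cV[C]_m) a 0)^* * M a j * (delta_mx b 0 : 'cV[C]_p) j 0 = 0.
  by apply: big1 => j /negPf jb; rewrite !mxE jb /= mulr0.
by rewrite !mxE !eqxx /= conjC1 mul1r mulr1 addr0.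
Qed.

Lemma entry_ineq n (X Y : 'I_2 -> 'M[C]_n) j a b c :
  herm_tuple X -> herm_tuple Y -> (forall x y, 0 <= Qf X Y x y) ->
  c^* * (X j + 'i *: Y j) a b + c * ((X j + 'i *: Y j) a b)^* <= c^* * c + 1.
Proof.
move=> HX HY P; have := P (c *: delta_mx a 0) (dlt j (delta_mx b 0)).
rewrite Qf_single subr_ge0 /nrm !formZl !formZr !form_delta.
have -> : X j - 'i *: Y j = adjmx (X j + 'i *: Y j).
  by rewrite adjmxD adjmxZ HX HY conjCi scaleNr.
by rewrite adjmxE !mxE !eqxx /= mulr1.
Qed.

End Alg.

Section Top.
Local Open Scope classical_set_scope.
Variable R : realType.
Local Notation C := R[i].
Local Notation Re := (@complex.Re R).
Local Notation Im := (@complex.Im R).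

Lemma ReD (x y : C) : Re (x + y) = Re x + Re y. Proof. by case: x; case: y. Qed.
Lemma ImD (x y : C) : Im (x + y) = Im x + Im y. Proof. by case: x; case: y. Qed.
Lemma ReN (x : C) : Re (- x) = - Re x. Proof. by case: x. Qed.
Lemma ImN (x : C) : Im (- x) = - Im x. Proof. by case: x. Qed.
Lemma ReM (x y : C) : Re (x * y) = Re x * Re y - Im x * Im y. Proof. by case: x; case: y. Qed.
Lemma ImM (x y : C) : Im (x * y) = Re x * Im y + Im x * Re y. Proof. by case: x; case: y. Qed.

Variable N : nat.
Definition CC (f : 'rV[R]_N -> C) :=
  continuous (fun w => Re (f w)) /\ continuous (fun w => Im (f w)).

Lemma CC_ext f g : (forall w, f w = g w) -> CC f -> CC g.
Proof. by move=> E; rewrite (_ : f = g) //; apply: funext. Qed.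

Lemma CC_cst c : CC (fun _ => c).
Proof. by split=> w; apply: cst_continuous. Qed.

Lemma contM (f g : 'rV[R]_N -> R) : continuous f -> continuous g ->
  continuous (fun w => f w * g w).
Proof. by move=> cf cg w; apply: (continuousM (cf w) (cg w)). Qed.
Lemma contB (f g : 'rV[R]_N -> R) : continuous f -> continuous g ->
  continuous (fun w => f w - g w).
Proof. by move=> cf cg w; apply: (continuousB (cf w) (cg w)). Qed.
Lemma contD (f g : 'rV[R]_N -> R) : continuous f -> continuous g ->
  continuous (fun w => f w + g w).
Proof. by move=> cf cg w; apply: (continuousD (cf w) (cg w)). Qed.
Lemma contN (f : 'rV[R]_N -> R) : continuous f -> continuous (fun w => - f w).
Proof. by move=> cf w; apply: (continuousN (cf w)). Qed.

Lemma CC_D f g : CC f -> CC g -> CC (fun w => f w + g w).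
Proof.
move=> [f1 f2] [g1 g2]; split.
  rewrite (_ : (fun w => Re (f w + g w)) = (fun w => Re (f w) + Re (g w))).
    exact: contD.
  by apply: funext => w; rewrite ReD.
rewrite (_ : (fun w => Im (f w + g w)) = (fun w => Im (f w) + Im (g w))).
  exact: contD.
by apply: funext => w; rewrite ImD.
Qed.

Lemma CC_N f : CC f -> CC (fun w => - f w).
Proof.
move=> [f1 f2]; split.
  rewrite (_ : (fun w => Re (- f w)) = (fun w => - Re (f w))).
    exact: contN.
  by apply: funext => w; rewrite ReN.
rewrite (_ : (fun w => Im (- f w)) = (fun w => - Im (f w))).
  exact: contN.
by apply: funext => w; rewrite ImN.
Qed.

Lemma CC_B f g : CC f -> CC g -> CC (fun w => f w - g w).
Proof. by move=> ? ?; apply: CC_D => //; apply: CC_N. Qed.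

Lemma CC_M f g : CC f -> CC g -> CC (fun w => f w * g w).
Proof.
move=> [f1 f2] [g1 g2]; split.
  rewrite (_ : (fun w => Re (f w * g w)) = (fun w => Re (f w) * Re (g w) - Im (f w) * Im (g w))).
    by apply: contB; apply: contM.
  by apply: funext => w; rewrite ReM.
rewrite (_ : (fun w => Im (f w * g w)) = (fun w => Re (f w) * Im (g w) + Im (f w) * Re (g w))).
  by apply: contD; apply: contM.
by apply: funext => w; rewrite ImM.
Qed.

Lemma CC_sum I (r : seq I) (P : pred I) (F : I -> 'rV[R]_N -> C) :
  (forall i, CC (F i)) -> CC (fun w => \sum_(i <- r | P i) F i w).
Proof.
move=> HF; elim: r => [|a r IH].
  by apply: (CC_ext (f := fun _ => 0)) => [w|]; rewrite ?big_nil //; apply: CC_cst.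
case: (boolP (P a)) => Pa.
  apply: (CC_ext (f := fun w => F a w + \sum_(i <- r | P i) F i w)) => [w|].
    by rewrite big_cons Pa.
  exact: CC_D.
by apply: (CC_ext (f := fun w => \sum_(i <- r | P i) F i w)) => [w|//]; rewrite big_cons (negbTE Pa).
Qed.

Lemma CC_coord (i j : 'I_N) : CC (fun w => complex.Complex (w 0 i) (w 0 j)).
Proof. by split=> /=; apply: coord_continuous. Qed.


Lemma CC_conj f : CC f -> CC (fun w => (f w)^*).
Proof.
move=> [f1 f2]; split.
  by rewrite (_ : (fun w => Re (f w)^*) = (fun w => Re (f w))) //; apply: funext => w; case: (f w).
rewrite (_ : (fun w => Im (f w)^*) = (fun w => - Im (f w))); first exact: contN.
by apply: funext => w; case: (f w).
Qed.

Lemma CC_form m p (M : 'rV[R]_N -> 'M[C]_(m,p)) u v :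
  (forall a b, CC (fun w => M w a b)) -> CC (fun w => form u (M w) v).
Proof.
move=> HM; apply: (CC_ext (f := fun w => \sum_i \sum_j (u i 0)^* * M w i j * v j 0)).
  by move=> w; rewrite formE.
apply: CC_sum => i; apply: CC_sum => j; apply: CC_M; last exact: CC_cst.
by apply: CC_M; [exact: CC_cst|exact: HM].
Qed.

Lemma closed_CC0 f : CC f -> closed [set w | f w = 0].
Proof.
move=> [f1 f2].
have -> : [set w | f w = 0] = (fun w => Re (f w)) @^-1` [set x | x = 0]
    `&` (fun w => Im (f w)) @^-1` [set x | x = 0].
  apply/seteqP; split=> w /=.
    by move=> ->.
  by case: (f w) => p q /= [-> ->].
apply: closedI; apply: preimage_closed; try exact: closed_eq.
  by move=> x _; exact: f1.
by move=> x _; exact: f2.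
Qed.

Lemma closed_CCge f : CC f -> closed [set w | 0 <= f w].
Proof.
move=> [f1 f2].
have -> : [set w | 0 <= f w] = (fun w => Im (f w)) @^-1` [set x | x = 0]
    `&` (fun w => Re (f w)) @^-1` [set x | 0 <= x].
  apply/seteqP; split=> w /=.
    by case: (f w) => p q; rewrite lecE /= => /andP [/eqP -> ->].
  by case: (f w) => p q /= [-> h]; rewrite lecE /= eqxx h.
apply: closedI; apply: preimage_closed; [|exact: closed_eq| |exact: closed_ge].
  by move=> x _; exact: f2.
by move=> x _; exact: f1.
Qed.

End Top.

Section Enc.
Local Open Scope classical_set_scope.
Variable R : realType.
Local Notation C := R[i].
Local Notation Re := (@complex.Re R).
Local Notation Im := (@complex.Im R).
Variable n : nat.
Local Notation Nn := ((2 + 2) * (2 * (n * n)))%N.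

Definition idx (k : 'I_(2 + 2)) (r : 'I_2) (a b : 'I_n) : 'I_Nn :=
  @mxtens_index (2 + 2) (2 * (n * n)) (k, @mxtens_index 2 (n * n) (r, @mxtens_index n n (a, b))).

Definition dec (w : 'rV[R]_Nn) : 'I_(2 + 2) -> 'M[C]_n :=
  fun k => \matrix_(a, b) complex.Complex (w 0 (idx k ord0 a b)) (w 0 (idx k i1 a b)).

Definition enc (T : 'I_(2 + 2) -> 'M[C]_n) : 'rV[R]_Nn :=
  \row_i (let p := @mxtens_unindex (2 + 2) (2 * (n * n)) i in
          let q := @mxtens_unindex 2 (n * n) p.2 in
          let ab := @mxtens_unindex n n q.2 in
          if q.1 == ord0 then Re (T p.1 ab.1 ab.2) else Im (T p.1 ab.1 ab.2)).

Lemma enc_idx T k r a b :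
  enc T 0 (idx k r a b) = if r == ord0 then Re (T k a b) else Im (T k a b).
Proof. by rewrite /enc /idx mxE !mxtens_indexK. Qed.

Lemma dec_enc T k : dec (enc T) k = T k.
Proof.
apply/matrixP=> a b; rewrite /dec mxE !enc_idx eqxx /=.
by case: (T k a b).
Qed.

Lemma idx_cover (P : 'I_Nn -> Prop) : (forall k r a b, P (idx k r a b)) -> forall i, P i.
Proof.
move=> H i; case: (mxtens_indexP i) => k t; case: (mxtens_indexP t) => r ab.
by case: (mxtens_indexP ab) => a b; exact: H.
Qed.

Definition prX (w : 'rV[R]_Nn) : 'I_2 -> 'M[C]_n := fun j => dec w (lshift 2 j).
Definition prY (w : 'rV[R]_Nn) : 'I_2 -> 'M[C]_n := fun j => dec w (rshift 2 j).

Definition proj (w : 'rV[R]_Nn) : 'rV[R]_Nn :=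
  \row_i (if (val (@mxtens_unindex (2 + 2) (2 * (n * n)) i).1 < 2)%N then w 0 i else 0).

Lemma prX_proj w : prX (proj w) = prX w.
Proof.
apply: funext => j; apply/matrixP => a b.
by rewrite /prX /dec !mxE /idx !mxtens_indexK /= ltn_ord.
Qed.

Lemma prX_enc (X Y : 'I_2 -> 'M[C]_n) : prX (enc (pair_tuple X Y)) = X.
Proof. by apply: funext => j; rewrite /prX dec_enc pairL. Qed.
Lemma prY_enc (X Y : 'I_2 -> 'M[C]_n) : prY (enc (pair_tuple X Y)) = Y.
Proof. by apply: funext => j; rewrite /prY dec_enc pairR. Qed.

Lemma proj_enc (X Y : 'I_2 -> 'M[C]_n) :
  proj (enc (pair_tuple X Y)) = enc (pair_tuple X (fun _ => 0)).
Proof.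
apply/rowP; apply: idx_cover => k r a b.
rewrite /proj mxE /idx mxtens_indexK /= -/(idx k r a b) !enc_idx.
case: (split_ordP k) => j ->; rewrite ?pairL ?pairR //=.
by rewrite mxE; case: (r == ord0).
Qed.

Lemma herm_dec w : herm_tuple (dec w) <-> herm_tuple (prX w) /\ herm_tuple (prY w).
Proof.
split=> [H|[H1 H2] k]; first by split=> j; apply: H.
by case: (split_ordP k) => j ->; [exact: H1|exact: H2].
Qed.


Lemma CC_dec k a b : CC (fun w : 'rV[R]_Nn => dec w k a b).
Proof.
apply: (CC_ext (f := fun w => complex.Complex (w 0 (idx k ord0 a b)) (w 0 (idx k i1 a b)))).
  by move=> w; rewrite /dec mxE.
exact: CC_coord.
Qed.

Lemma CC_Qf x y : CC (fun w : 'rV[R]_Nn => Qf (prX w) (prY w) x y).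
Proof.
rewrite /Qf; apply: CC_B; first by apply: CC_D; [exact: CC_cst|apply: CC_sum => j; exact: CC_cst].
apply: CC_sum => j; apply: CC_D; apply: CC_form => a b.
  apply: (CC_ext (f := fun w => prX w j a b + 'i * prY w j a b)); first by move=> w; rewrite !mxE.
  by apply: CC_D; [exact: CC_dec|apply: CC_M; [exact: CC_cst|exact: CC_dec]].
apply: (CC_ext (f := fun w => prX w j a b - 'i * prY w j a b)); first by move=> w; rewrite !mxE.
by apply: CC_B; [exact: CC_dec|apply: CC_M; [exact: CC_cst|exact: CC_dec]].
Qed.

Definition Dc : set 'rV[R]_Nn :=
  [set w | herm_tuple (dec w) /\ forall x y, 0 <= Qf (prX w) (prY w) x y].

Lemma closed_Dc : closed Dc.
Proof.
have -> : Dc = (\bigcap_(k in setT) \bigcap_(a in setT) \bigcap_(b in setT)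
     [set w | dec w k a b - (dec w k b a)^* = 0]) `&`
   (\bigcap_(x in setT) \bigcap_(y in setT) [set w | 0 <= Qf (prX w) (prY w) x y]).
  apply/seteqP; split=> w /=.
    move=> [H P]; split=> [k _ a _ b _|x _ y _] /=; last exact: P.
    by apply/eqP; rewrite subr_eq0; apply/eqP; rewrite -[in LHS](H k) adjmxE.
  move=> [H P]; split=> [k|x y]; last exact: P.
  apply/matrixP => a b; rewrite adjmxE.
  by have /eqP := H k I b I a I; rewrite subr_eq0 => /eqP ->; rewrite conjCK.
apply: closedI.
  apply: closed_bigI => k _; apply: closed_bigI => a _; apply: closed_bigI => b _.
  by apply: closed_CC0; apply: CC_B; [exact: CC_dec|apply: CC_conj; exact: CC_dec].
apply: closed_bigI => x _; apply: closed_bigI => y _.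
exact: closed_CCge (CC_Qf _ _).
Qed.

Definition Box : set 'rV[R]_Nn := [set v | forall i, `[-1, 1]%classic (v ord0 i)].

Lemma compact_D : compact (Box `&` Dc).
Proof.
apply: compact_closedI; last exact: closed_Dc.
have := @rV_compact R Nn (fun=> `[-1, 1]%classic) (fun=> @segment_compact R (-1) 1).
by [].
Qed.

Lemma proj_continuous : continuous proj.
Proof.
move=> x B /nbhs_ballP [e e0 sB]; apply/nbhs_ballP; exists e => // y [_ xy].
apply: sB; split=> // i j; rewrite /proj !mxE.
case: ifP => _; first exact: xy.
exact: ballxx.
Qed.

End Enc.

Section Bounds.
Local Open Scope classical_set_scope.
Variable R : realType.
Local Notation C := R[i].

Lemma iE : ('i : C) = complex.Complex 0 1. Proof. by []. Qed.
Lemma cE (x : C) : x^* = complex.conjc x. Proof. by []. Qed.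

Lemma ib (t : C) :
  (forall c : C, c^* * t + c * t^* <= c^* * c + 1) ->
  [/\ -1 <= complex.Re t <= 1 & -1 <= complex.Im t <= 1].
Proof.
case: t => p q H.
have h1 := H 1. have h2 := H (-1). have h3 := H 'i. have h4 := H (-'i).
move: h1 h2 h3 h4; rewrite iE !cE /= !lecE /=.
move=> /andP[_ h1] /andP[_ h2] /andP[_ h3] /andP[_ h4].
by split; apply/andP; split; lra.
Qed.

Lemma entry_bounds n (X Y : 'I_2 -> 'M[C]_n) j a b :
  herm_tuple X -> herm_tuple Y -> (forall x y, 0 <= Qf X Y x y) ->
  [/\ -1 <= complex.Re (X j a b) <= 1, -1 <= complex.Im (X j a b) <= 1,
      -1 <= complex.Re (Y j a b) <= 1 & -1 <= complex.Im (Y j a b) <= 1].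
Proof.
move=> HX HY P.
have [t1 t2] := ib (fun c => entry_ineq j a b c HX HY P).
have [t3 t4] := ib (fun c => entry_ineq j b a c HX HY P).
have ex : X j b a = (X j a b)^* by rewrite -{1}(HX j) adjmxE.
have ey : Y j b a = (Y j a b)^* by rewrite -{1}(HY j) adjmxE.
move: t1 t2 t3 t4; rewrite !mxE ex ey iE !cE.
case: (X j a b) => x1 x2; case: (Y j a b) => y1 y2 /=.
move=> /andP[t1 t1'] /andP[t2 t2'] /andP[t3 t3'] /andP[t4 t4'].
by split; apply/andP; split; lra.
Qed.

End Bounds.

Section Closed.
Local Open Scope classical_set_scope.
Variable R : realType.
Local Notation C := R[i].

Lemma nE (x : C) : `|x| = real_complex R (Num.sqrt (complex.Re x ^+ 2 + complex.Im x ^+ 2)).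
Proof. by case: x. Qed.

Lemma re_lt (z : C) (e : R) : `|z| < real_complex R e ->
  `|complex.Re z| < e /\ `|complex.Im z| < e.
Proof.
rewrite nE ltcR => h; split; apply: le_lt_trans h.
  by rewrite -sqrtr_sqr ler_wsqrtr // lerDl sqr_ge0.
by rewrite -sqrtr_sqr ler_wsqrtr // lerDr sqr_ge0.
Qed.

Lemma enc_box n (X Y : 'I_2 -> 'M[C]_n) :
  herm_tuple X -> herm_tuple Y -> (forall x y, 0 <= Qf X Y x y) ->
  @Box R n (enc (pair_tuple X Y)).
Proof.
move=> HX HY P; rewrite /Box /= => i.
apply: (@idx_cover n (fun i => `[-1, 1]%classic (enc (pair_tuple X Y) ord0 i))) => k r a b.
rewrite enc_idx /= in_itv.
case: (split_ordP k) => j ->; rewrite ?pairL ?pairR.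
  by have [? ? ? ?] := entry_bounds j a b HX HY P; case: (r == ord0).
by have [? ? ? ?] := entry_bounds j a b HX HY P; case: (r == ord0).
Qed.

Lemma closed_A : fs_closed (@spectrahedrop C 3 2 2 (@Aop C)).
Proof.
move=> n X Happ.
pose D := @Box R n `&` @Dc R n.
have cP : compact (@proj R n @` D).
  apply: continuous_compact; last exact: compact_D.
  by apply: continuous_subspaceT; exact: proj_continuous.
have clP : closed (@proj R n @` D) by apply: compact_closed => //; exact: norm_hausdorff.
pose e0 := enc (pair_tuple X (fun _ => 0 : 'M[C]_n)).
have : closure (@proj R n @` D) e0.
  move=> B /nbhs_ballP [e epos sB].
  have epC : 0 < real_complex R e by rewrite ltcR.
  have [Y [KY close]] := Happ _ epC.
  have [W [HY HW P]] := (spec_A Y).1 KY.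
  pose w := enc (pair_tuple Y W).
  exists (proj w); split.
    exists w; last by [].
    split; first exact: enc_box.
    split; first by apply/herm_dec; rewrite /w prX_enc prY_enc.
    by rewrite /w prX_enc prY_enc.
  apply: sB; rewrite /w proj_enc /e0; split=> // u j; rewrite [u]ord1.
  move: j; apply: (@idx_cover n (fun j => ball (enc (pair_tuple X (fun _ => 0 : 'M[C]_n)) 0 j) e
           (enc (pair_tuple Y (fun _ => 0 : 'M[C]_n)) 0 j))) => k r a b.
  rewrite !enc_idx; case: (split_ordP k) => l ->; rewrite ?pairL ?pairR.
    have [h1 h2] := re_lt (close l a b).
    case: (r == ord0); rewrite /ball /= distrC.
      by rewrite -ReN -ReD.
    by rewrite -ImN -ImD.
  rewrite mxE; case: (r == ord0); exact: ballxx.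
rewrite -(closure_id _).1 //; case=> w [_ [HD P]] pe.
have EX : prX w = X by rewrite -prX_proj pe /e0 prX_enc.
apply/spec_A; exists (prY w); rewrite -EX.
by have [? ?] := (herm_dec w).1 HD; split.
Qed.

End Closed.

Theorem mainTheorem18 (R : realType) :
  exists (d g h : nat) (A : 'I_(g + h) -> 'M[R[i]]_d),
    herm_tuple A /\
    fs_closed (spectrahedrop A) /\
    fs_bounded (spectrahedrop A) /\
    fs_conj_closed (spectrahedrop A) /\
    (forall (n : nat) (X : 'I_g -> 'M[R[i]]_n.+1),
        ~ free_extreme (spectrahedrop A) X).
Proof.
exists 3%N, 2%N, 2%N, (@Aop R[i]).
split; first exact: herm_Aop.
split; first exact: closed_A.
split; first exact: bounded_A.
split; first exact: conj_closed_A.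
by move=> n X; exact: no_free_ext.
Qed.
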